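(* Let $G$ be a finite $\pi$-separable group, $W\le G$, and $\gamma\in\operatorname{Irr}(W)$ $\pi$-factored. Let $N\trianglelefteq G$ with $N\le W$, and let $\theta\in\operatorname{Irr}(N)$ lie under $\gamma$. Let $Q$ be a Hall $\pi'$-subgroup of $W$ and put $\delta=(\gamma_{\pi'})_Q$. If $\delta$ is a linear character that is stable in $G$, then $\theta$ is $\pi$-factored and its $\pi'$-special factor $\theta_{\pi'}$ is a $G$-invariant linear character.
   Context: $\pi$ is a set of primes. An irreducible character $\chi$ of a $\pi$-separable group $H$ is $\pi$-special if $\chi(1)$ is a $\pi$-number and for every subnormal subgroup $S$ of $H$ every irreducible constituent of $\chi_S$ has determinantal order a $\pi$-number; $\chi$ is $\pi$-factored if $\chi=\alpha\beta$ with $\alpha$ $\pi$-special and $\beta$ $\pi'$-special; the factors are unique and denoted $\chi_\pi$, $\chi_{\pi'}$. A character $\delta$ of a subgroup $Q\le G$ is stable in $G$ if $\delta(x)=\delta(y)$ whenever $x,y\in Q$ are conjugate in $G$. *)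

(* Defs.v *)
From HB Require Import structures.
From mathcomp Require Import all_boot all_order all_algebra all_fingroup all_solvable all_field all_character.

Set Implicit Arguments.
Unset Strict Implicit.
Unset Printing Implicit Defensive.

Import GRing.Theory Num.Theory.

Local Open Scope group_scope.
Local Open Scope ring_scope.

Section PiDefs.
Variable gT : finGroupType.

Definition pi_separable (pi : nat_pred) (G : {group gT}) : Prop :=
  exists s : seq {group gT},
    [/\ last 1%G s = G,
        all (fun H : {group gT} => H <| G) s &
        path (fun H K : {group gT} =>
                (H \subset K) && (pi.-nat #|K : H| || pi^'.-nat #|K : H|))
             1%G s].

Definition pi_special (pi : nat_pred) (H : {group gT}) (chi : 'CF(H)) : Prop :=
  [/\ chi \in irr H,
      exists2 n : nat, (chi 1%g = n%:R)%R & pi.-nat n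
    & forall S : {group gT}, S <|<| H ->
        forall i : Iirr S, i \in irr_constt ('Res[S] chi) -> pi.-nat 'o('chi_i)%CF].

Definition pi_factored (pi : nat_pred) (H : {group gT}) (chi : 'CF(H)) : Prop :=
  exists alpha beta : 'CF(H),
    [/\ pi_special pi alpha, pi_special pi^' beta & chi = (alpha * beta)%R].

Definition stable_in (G Q : {group gT}) (delta : 'CF(Q)) : Prop :=
  forall x y g, x \in Q -> y \in Q -> g \in G -> y = (x ^ g)%g -> delta x = delta y.

End PiDefs.

(* Main.v *)
Require Import Defs.
From HB Require Import structures.
From mathcomp Require Import all_boot all_order all_algebra all_fingroup all_solvable all_field all_character.

Set Implicit Arguments.
Unset Strict Implicit.
Unset Printing Implicit Defensive.
Import GRing.Theory Num.Theory.
Local Open Scope ring_scope.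

Theorem lemma3p1 (gT : finGroupType) (pi : nat_pred) (G W N Q : {group gT})
    (gamma alpha beta : 'CF(W)) (i : Iirr N) :
  pi_separable pi G -> (W \subset G)%g ->
  gamma \in irr W ->
  pi_special pi alpha -> pi_special pi^' beta -> gamma = (alpha * beta)%R ->
  (N <| G)%g -> (N \subset W)%g ->
  i \in irr_constt ('Res[N] gamma)%R ->
  (pi^'.-Hall(W) Q)%g ->
  ('Res[Q] beta)%R \is a linear_char -> stable_in G ('Res[Q] beta)%R ->
  exists alpha' beta' : 'CF(N),
    [/\ pi_special pi alpha', pi_special pi^' beta', ('chi_i = alpha' * beta')%R,
        beta' \is a linear_char & (G \subset 'I[beta'])%g].
Proof.
move=> _ sWG irrgam spA spB defg nNG sNW Ci hallQ linRes stab.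
have nNW : (N <| W)%g := normalS sNW sWG nNG.
have [irrB _ oB] := spB; have [irrA [a Aa pa] oA] := spA.
have sQW : (Q \subset W)%g := pHall_sub hallQ.
have B1 : (beta 1%g = 1)%R.
  by case/andP: linRes => _ /eqP; rewrite cfRes1.
have linB : beta \is a linear_char by rewrite qualifE /= irrWchar // B1 eqxx.
set b' := 'Res[N] beta.
have linb' : b' \is a linear_char := cfRes_lin_char N linB.
have nNGs := normal_norm nNG.
have betapi : forall u (p : nat), u \in W -> (p.-elt u)%g -> p \notin pi^' -> (beta u = 1)%R.
  move=> u p Wu pu pp.
  have [k defk] : exists k, beta = 'chi_k by apply/irrP.
  have ok : pi^'.-nat #[beta]%CF.
    have := oB W (subnormal_refl W) k.
    rewrite cfRes_id defk constt_irr inE eqxx => /(_ isT).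
    by rewrite -defk cfDet_order_lin.
  have piu : (pi.-elt u)%g by apply: pi_pnat pu _; rewrite inE /= in pp; rewrite negbK in pp.
  have co : coprime #|<[u]>%g| #[beta]%CF by rewrite -orderE; exact: pnat_coprime piu ok.
  have Uu : u \in <[u]>%g := cycle_id u.
  rewrite -(expgK co Uu) lin_charX ?groupX // lin_charX //.
  by rewrite -exp_cfunE // exp_cforder cfun1E Wu expr1n.
have conjQ : forall u (p : nat), u \in W -> (p.-elt u)%g -> p \in pi^' ->
    exists2 w, w \in W & (u ^ w)%g \in Q.
  move=> u p Wu pu pp.
  have [P sylP] := Sylow_exists p Q.
  have sylPW := subHall_Sylow hallQ pp sylP.
  have sUW : (<[u]> \subset W)%g by rewrite cycle_subG.
  have [w Ww sUP] := Sylow_Jsub sylPW sUW pu.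
  exists w => //; apply: (subsetP (pHall_sub sylP)); apply: (subsetP sUP).
  by rewrite memJ_conjg cycle_id.
have keyp : forall z g (p : nat), z \in N -> g \in G ->
    beta ((z.`_p) ^ g)%g = beta (z.`_p)%g.
  move=> z g p Nz Gg.
  have Ny : (z.`_p)%g \in N by apply: (subsetP _ _ (cycle_constt p z)); rewrite cycle_subG.
  have Nyg : ((z.`_p) ^ g)%g \in N by rewrite memJ_norm // (subsetP nNGs).
  have Wy := subsetP sNW _ Ny; have Wyg := subsetP sNW _ Nyg.
  have py : (p.-elt (z.`_p))%g := p_elt_constt p z.
  have pyg : (p.-elt ((z.`_p) ^ g))%g by rewrite p_eltJ.
  have [pp | pp] := boolP (p \in pi^'); last first.
    by rewrite (betapi _ p) // (betapi _ p).
  have [w1 Ww1 Q1] := conjQ _ p Wy py pp.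
  have [w2 Ww2 Q2] := conjQ _ p Wyg pyg pp.
  rewrite -(cfunJ _ _ Ww2) -(cfunJ _ (z.`_p)%g Ww1).
  rewrite -!(cfResE _ sQW) //.
  symmetry; apply: (stab _ _ (w1^-1 * g * w2)%g) => //.
    by rewrite !groupM ?groupV // (subsetP sWG).
  by rewrite !conjgM conjgK.
have key : forall z g, z \in N -> g \in G -> beta (z ^ g)%g = beta z.
  move=> z g Nz Gg.
  have Nzg : (z ^ g)%g \in N by rewrite memJ_norm // (subsetP nNGs).
  have memp : forall x (p : nat), x \in N -> (x.`_p)%g \in W.
    move=> x p Nx; apply: (subsetP sNW); apply: (subsetP _ _ (cycle_constt p x)).
    by rewrite cycle_subG.
  have E1 : beta (z ^ g)%g = \prod_(0 <= p < #[z]%g.+1) beta ((z.`_p) ^ g)%g.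
    rewrite -{1}(prod_constt (z ^ g)%g) orderJ (lin_char_prod linB) => [|p _]; last exact: memp.
    by apply: eq_bigr => p _; rewrite consttJ.
  have E2 : beta z = \prod_(0 <= p < #[z]%g.+1) beta (z.`_p)%g.
    by rewrite -{1}(prod_constt z) (lin_char_prod linB) => [//|p _]; exact: memp.
  by rewrite E1 E2; apply: eq_bigr => p _; exact: keyp.
have [k defk] : exists k, gamma = 'chi_k by apply/irrP.
have := Ci; case/(constt_charP _ (cfRes_char N (irrWchar irrgam))) => psi Npsi defRes.
set a' := 'chi_i * b'^*%CF.
have Mb : b' * b'^*%CF = 1 := mul_conjC_lin_char linb'.
have defi : 'chi_i = a' * b' by rewrite /a' -mulrA (mulrC _ b') Mb mulr1.
have linbc : b'^*%CF \is a linear_char by rewrite cfConjC_lin_char.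
have irra' : a' \in irr N by rewrite /a' mulrC mul_lin_irr ?mem_irr.
have a'1 : a' 1%g = 'chi_i 1%g by rewrite /a' cfunE (lin_char1 linbc) mulr1.
have ResA : 'Res[N] alpha = a' + psi * b'^*%CF.
  have : 'Res[N] gamma * b'^*%CF = 'Res[N] alpha by rewrite defg rmorphM /= -mulrA Mb mulr1.
  by move<-; rewrite defRes mulrDl.
exists a', b'; split => //.
- split => //.
    have /natrP[t Et] := Cnat_irr1 i.
    exists t; first by rewrite a'1.
    have Ck : i \in irr_constt ('Res[N] 'chi_k) by rewrite -defk.
    have [n En] := dvdn_constt_Res1_irr1 nNW Ck.
    have Ea : a = (n * t)%N.
      apply/eqP; rewrite -(eqr_nat algC) natrM -Et -En -defk defg cfunE Aa B1 mulr1.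
      by [].
    by apply: pnat_dvd pa; rewrite Ea dvdn_mull.
  move=> S sSN j Cj.
  apply: (oA S (subnormal_trans sSN (normal_subnormal nNW))).
  have sSN' := subnormal_sub sSN.
  move: Cj; rewrite !irr_consttE -(cfResRes _ sSN' sNW) ResA rmorphD cfdotDl => nz.
  have Na' : a' \is a character := irrWchar irra'.
  have Npb : psi * b'^*%CF \is a character by apply: rpredM => //; apply: lin_charW.
  rewrite paddr_eq0 ?negb_and ?nz //; apply: natr_ge0; apply: Cnat_cfdot_char;
    by [apply: cfRes_char | exact: irr_char].
- split; first exact: lin_char_irr linb'.
    by exists 1%N; [rewrite lin_char1 | ].
  move=> S sSN j; rewrite /b' (cfResRes _ (subnormal_sub sSN) sNW) => Cj.
  exact: (oB S (subnormal_trans sSN (normal_subnormal nNW)) j Cj).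
apply/subsetP => g Gg; have nNg := subsetP nNGs g Gg.
rewrite inE nNg /=; apply/eqP/cfunP => x; rewrite cfConjgE //.
have [Nx | Nx] := boolP (x \in N).
  have Nx' : (x ^ g^-1)%g \in N by rewrite memJ_norm ?groupV.
  by rewrite /b' !cfResE // -{2}(conjgKV g x) (key _ g Nx' Gg).
by rewrite !cfun0 // memJ_norm ?groupV.
Qed.
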